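(* Let $p,q\in\mathcal{S}$, $k^*=\arg\max_kq_k$, $k_*=\arg\min_kq_k$, $\delta\in[0,\log(1/p_{k^*}))$, and for each $m$ let $Y^m\sim\phi_\delta^m$. The map $\beta\mapsto H(T(q,p,\beta)\|q)$ is a continuous strictly decreasing bijection from $\mathbb{R}$ onto the open interval $I=(\log(1/q_{k^*}),\log(1/q_{k_*}))$; for $t\in I$ let $\beta(t)$ be the unique $\beta\in\mathbb{R}$ with $H(T(q,p,\beta)\|q)=t$. Then the sequence $\{-\frac1m\log q^m(Y^m)\}_{m\in\mathbb{N}}$ (i.e. the negative per-symbol reward) satisfies a large deviation principle with rate function $$J_\delta(t)=D_{\mathrm{KL}}\big(T(q,p,\beta(t))\,\|\,\phi_\delta\big)\quad (t\in I),$$ $J_\delta(\log(1/q_{k^*}))=\log(1/\phi_\delta(k^* ))$, $J_\delta(\log(1/q_{k_*}))=\log(1/\phi_\delta(k_* ))$, and $J_\delta(t)=+\infty$ for $t\notin\bar I$.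
   Context: Fix $K\ge2$, $\zeta\in(0,1/K)$. $\mathcal{S}$ is the set of probability vectors on $[K]$ with all entries $>\zeta$ and pairwise distinct. $p^m(y^m)=\prod_i p_{y_i}$ denotes the product distribution on $[K]^m$; the reward of $y^m$ is $r(y^m)=\log q^m(y^m)$. $H(a\|b)=\sum a\log(1/b)$, $D_{\mathrm{KL}}(a\|b)=\sum a\log(a/b)$. Mismatched tilt: $T(q,p,\alpha)_k=p_kq_k^\alpha/\sum_jp_jq_j^\alpha$ for $\alpha\in\mathbb{R}$. For $\delta\in[0,\log(1/p_{k^*}))$, $\alpha(\delta)$ is the unique $\alpha\ge0$ with $D_{\mathrm{KL}}(T(q,p,\alpha)\|p)=\delta$, and $\phi_\delta=T(q,p,\alpha(\delta))$. A sequence of real random variables $\{Z_n\}$ satisfies a large deviation principle (LDP) with rate function $J:\mathbb{R}\to[0,\infty]$ if $J$ is lower semicontinuous with compact level sets and for every Borel set $B$: $-\inf_{t\in B^\circ}J(t)\le\liminf_n\frac1n\log\mathbb{P}(Z_n\in B)\le\limsup_n\frac1n\log\mathbb{P}(Z_n\in B)\le-\inf_{t\in\bar B}J(t)$. *)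

(* Defs.v *)
From HB Require Import structures.
From mathcomp Require Import all_boot all_order all_algebra.
From mathcomp Require Import all_classical all_reals all_analysis.
Set Implicit Arguments. Unset Strict Implicit. Unset Printing Implicit Defensive.
Import Order.TTheory GRing.Theory Num.Theory.
Import numFieldNormedType.Exports.
Local Open Scope classical_set_scope.
Local Open Scope ring_scope.

Section Defs.
Variable R : realType.
Variable K : nat.

Definition inS (zeta : R) (p : 'I_K -> R) : Prop :=
  [/\ \sum_(k < K) p k = 1,
      (forall k, zeta < p k) &
      (forall j k : 'I_K, j != k -> p j != p k)].

Definition tilt (q p : 'I_K -> R) (a : R) : 'I_K -> R :=
  fun k => p k * q k `^ a / \sum_(j < K) p j * q j `^ a.

Definition crossH (a b : 'I_K -> R) : R := \sum_(k < K) a k * ln (b k)^-1.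

Definition KL (a b : 'I_K -> R) : R := \sum_(k < K) a k * ln (a k / b k).

Definition elog (x : R) : \bar R := if x == 0 then -oo%E else (ln x)%:E.

Definition negreward (q : 'I_K -> R) (m : nat) (y : {ffun 'I_m -> 'I_K}) : R :=
  - (m%:R^-1 * ln (\prod_(i < m) q (y i))).

(* P(Z_m \in B) where Z_m = -(1/m) log q^m(Y^m), Y^m ~ phi^m (product law) *)
Definition probZ (phi q : 'I_K -> R) (m : nat) (B : set R) : R :=
  \sum_(y : {ffun 'I_m -> 'I_K})
     (if negreward q y \in B then \prod_(i < m) phi (y i) else 0).

End Defs.

(* The sequence is indexed by
   m = n.+1 (n : nat) to avoid the meaningless m = 0 term; this does not
   affect liminf/limsup. *)
Definition LDP (R : realType) (mu : nat -> set R -> R) (J : R -> \bar R) : Prop :=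
  [/\ (forall t, (0 <= J t)%E),
      lower_semicontinuous J,
      (forall c : R, compact [set t | (J t <= c%:E)%E]) &
      (forall B : set R, measurable B ->
        (- ereal_inf (J @` interior B)
           <= limn_einf (fun n => (n.+1%:R^-1)%:E * elog (mu n.+1 B)))%E /\
        (limn_esup (fun n => (n.+1%:R^-1)%:E * elog (mu n.+1 B))
           <= - ereal_inf (J @` closure B))%E)].

(* Main.v *)
Require Import Defs.
From HB Require Import structures.
From mathcomp Require Import all_boot all_order all_algebra.
From mathcomp Require Import all_classical all_reals all_analysis.
From mathcomp Require Import ring lra.
Import Order.TTheory GRing.Theory Num.Theory.
Import numFieldNormedType.Exports.
Local Open Scope classical_set_scope.
Local Open Scope ring_scope.
Set Implicit Arguments. Unset Strict Implicit. Unset Printing Implicit Defensive.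
Section Basics.
Variable R : realType.
Variable K : nat.
Variables p q : 'I_K -> R.
Hypothesis hp : forall k, 0 < p k.
Hypothesis hq : forall k, 0 < q k.

Definition cc (k : 'I_K) : R := ln (q k)^-1.
Definition Zs (g : R) : R := \sum_(k < K) p k * expR (g * ln (q k)).
Definition LL (g : R) : R := ln (Zs g).
Definition ff (g : R) : R := \sum_(k < K) tilt q p g k * cc k.
Definition MM (th b t : R) : R := (th - b) * t + LL th - LL b.

Lemma ccE k : cc k = - ln (q k).
Proof. by rewrite /cc lnV // posrE. Qed.

Lemma powRq g k : q k `^ g = expR (g * ln (q k)).
Proof. by rewrite /powR gt_eqF. Qed.

Lemma tiltE g k : tilt q p g k = p k * expR (g * ln (q k)) / Zs g.
Proof.
by rewrite /tilt powRq; congr (_ / _); apply: eq_bigr => j _; rewrite powRq.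
Qed.

Hypothesis K0 : (0 < K)%N.

Lemma Zs_gt0 g : 0 < Zs g.
Proof.
rewrite /Zs (bigD1 (Ordinal K0)) //= ltr_wpDr //.
  by apply: sumr_ge0 => k _; rewrite mulr_ge0 // ?ltW ?expR_gt0.
by rewrite mulr_gt0 ?expR_gt0.
Qed.

Lemma tilt_gt0 g k : 0 < tilt q p g k.
Proof. by rewrite tiltE divr_gt0 ?Zs_gt0 // mulr_gt0 ?expR_gt0. Qed.

Lemma sum_tilt g : \sum_(k < K) tilt q p g k = 1.
Proof.
under eq_bigr => k _ do rewrite tiltE.
by rewrite -mulr_suml divff // gt_eqF // Zs_gt0.
Qed.

Lemma tilt_le1 g k : tilt q p g k <= 1.
Proof.
rewrite -(sum_tilt g) (bigD1 k) //= lerDl.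
by apply: sumr_ge0 => j _; rewrite ltW // tilt_gt0.
Qed.

Lemma ln_tilt g k : ln (tilt q p g k) = ln (p k) - g * cc k - LL g.
Proof.
rewrite tiltE ln_div ?posrE ?Zs_gt0 ?mulr_gt0 ?expR_gt0 //.
by rewrite lnM ?posrE ?expR_gt0 // expRK ccE mulrN opprK.
Qed.

Lemma ln_tilt_ratio b g k :
  ln (tilt q p b k / tilt q p g k) = (g - b) * cc k + LL g - LL b.
Proof.
rewrite ln_div ?posrE ?tilt_gt0 // !ln_tilt.
by rewrite mulrBl; lra.
Qed.

Lemma KL_tilt b g :
  KL (tilt q p b) (tilt q p g) = (g - b) * ff b + LL g - LL b.
Proof.
rewrite /KL /ff.
have -> : \sum_(k < K) tilt q p b k * ln (tilt q p b k / tilt q p g k) =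
   \sum_(k < K) ((g - b) * (tilt q p b k * cc k) + tilt q p b k * (LL g - LL b)).
  by apply: eq_bigr => k _; rewrite ln_tilt_ratio; ring.
by rewrite big_split /= -mulr_sumr -mulr_suml sum_tilt; ring.
Qed.

Lemma KL_tilt_MM b th : KL (tilt q p b) (tilt q p th) = MM th b (ff b).
Proof. by rewrite KL_tilt /MM. Qed.

End Basics.
Section Gibbs.
Variable R : realType.
Variable K : nat.

Lemma ln_le_sub1 (x : R) : 0 < x -> ln x <= x - 1.
Proof.
move=> x0; have := expR_ge1Dx (ln x); rewrite lnK ?posrE //; lra.
Qed.

Lemma ln_lt_sub1 (x : R) : 0 < x -> x != 1 -> ln x < x - 1.
Proof.
move=> x0 x1; have := @expR_gt1Dx R (ln x); rewrite lnK ?posrE // ln_eq0 // x1.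
move=> /(_ isT); lra.
Qed.

Lemma gibbs_pt (a b : R) : 0 < a -> 0 < b -> a - b <= a * ln (a / b).
Proof.
move=> a0 b0.
have -> : a / b = (b / a)^-1 by rewrite invf_div.
rewrite lnV ?posrE ?divr_gt0 //.
have := ln_le_sub1 (divr_gt0 b0 a0).
move=> h; have : a * ln (b / a) <= a * (b / a - 1) by rewrite ler_pM2l.
rewrite mulrBr mulrCA divff ?gt_eqF // mulr1 mulr1; lra.
Qed.

Lemma gibbs_pt_strict (a b : R) : 0 < a -> 0 < b -> a != b -> a - b < a * ln (a / b).
Proof.
move=> a0 b0 ab.
have -> : a / b = (b / a)^-1 by rewrite invf_div.
rewrite lnV ?posrE ?divr_gt0 //.
have ba1 : b / a != 1.
  apply/eqP => h; move/eqP: ab; apply; apply/esym.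
  by move: h => /(congr1 (fun x => x * a)); rewrite mul1r mulrVK // unitfE gt_eqF.
have := ln_lt_sub1 (divr_gt0 b0 a0) ba1.
move=> h; have : a * ln (b / a) < a * (b / a - 1) by rewrite ltr_pM2l.
rewrite mulrBr mulrCA divff ?gt_eqF // mulr1 mulr1; lra.
Qed.

Lemma gibbs (P Q : 'I_K -> R) : (forall k, 0 < P k) -> (forall k, 0 < Q k) ->
  \sum_k P k = \sum_k Q k -> 0 <= \sum_k P k * ln (P k / Q k).
Proof.
move=> P0 Q0 PQ.
apply: le_trans (_ : \sum_k (P k - Q k) <= _).
  by rewrite sumrB PQ subrr.
by apply: ler_sum => k _; apply: gibbs_pt.
Qed.

Lemma gibbs_strict (P Q : 'I_K -> R) : (forall k, 0 < P k) -> (forall k, 0 < Q k) ->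
  \sum_k P k = \sum_k Q k -> (exists k, P k != Q k) ->
  0 < \sum_k P k * ln (P k / Q k).
Proof.
move=> P0 Q0 PQ [k0 Pk0].
have h0 : \sum_k (P k - Q k) = 0 by rewrite sumrB PQ subrr.
suff : \sum_k (P k - Q k) < \sum_k P k * ln (P k / Q k) by rewrite h0.
rewrite (bigD1 k0) //= [X in _ < X](bigD1 k0) //=.
apply: ltr_leD; first exact: gibbs_pt_strict.
by apply: ler_sum => k _; apply: gibbs_pt.
Qed.
End Gibbs.
Section Cont.
Variable R : realType.

Lemma continuous_sumr (I : Type) (r : seq I) (F : I -> R -> R) :
  (forall i, continuous (F i)) -> continuous (fun x => \sum_(i <- r) F i x).
Proof.
move=> hF; elim: r => [|i r IH].
  under eq_fun do rewrite big_nil; exact: cst_continuous.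
under eq_fun do rewrite big_cons.
by move=> x; apply: continuousD; [exact: hF| exact: IH].
Qed.

Lemma continuous_expRM (a : R) : continuous (fun g : R => expR (g * a)).
Proof.
move=> x; apply: (@continuous_comp _ _ _ (fun g : R => g * a) expR).
  by apply: continuousM; [exact: cvg_id|exact: cst_continuous].
exact: continuous_expR.
Qed.

End Cont.

Lemma ff_continuous (R : realType) K (p q : 'I_K -> R) :
  (forall k, 0 < p k) -> (forall k, 0 < q k) -> (0 < K)%N -> continuous (ff p q).
Proof.
move=> hp hq K0.
have hZ : continuous (Zs p q).
  apply: continuous_sumr => k x.
  have h1 : {for x, continuous (fun=> p k)} by apply: cst_continuous.
  have h2 : {for x, continuous (fun g : R => expR (g * ln (q k)))}.
    exact: continuous_expRM.
  exact: (continuousM h1 h2).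
rewrite /ff; under eq_fun do under eq_bigr do rewrite tiltE //.
apply: continuous_sumr => k x.
have h1 : {for x, continuous (fun g : R => p k * expR (g * ln (q k)))}.
  have h1 : {for x, continuous (fun=> p k)} by apply: cst_continuous.
  have h2 : {for x, continuous (fun g : R => expR (g * ln (q k)))}.
    exact: continuous_expRM.
  exact: (continuousM h1 h2).
have h2 : {for x, continuous (fun g : R => (Zs p q g)^-1)}.
  by apply: continuousV; [rewrite gt_eqF // Zs_gt0|exact: hZ].
have h3 := continuousM h1 h2.
have h4 : {for x, continuous (fun=> cc q k)} by apply: cst_continuous.
exact: (continuousM h3 h4).
Qed.
Section Lim.
Variable R : realType.
Variable K : nat.
Variables p q : 'I_K -> R.
Hypothesis hp : forall k, 0 < p k.
Hypothesis hq : forall k, 0 < q k.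
Hypothesis K0 : (0 < K)%N.

Lemma tilt_lim (kk : 'I_K) (s : R) :
  (forall k, k != kk -> s * (ln (q k) - ln (q kk)) < 0) ->
  forall e, 0 < e -> exists G, forall g, G <= g -> 1 - tilt q p (s * g) kk <= e.
Proof.
move=> hs e e0.
have eK : 0 < e / K%:R by rewrite divr_gt0 // ltr0n.
have hG : forall k, exists G : R, k != kk -> forall g, G <= g ->
    p k / p kk * expR (g * (s * (ln (q k) - ln (q kk)))) <= e / K%:R.
  move=> k; case: (eqVneq k kk) => [->|kk']; first by exists 0.
  set d := s * (ln (q k) - ln (q kk)).
  have d0 : d < 0 by exact: hs.
  exists (ln (e / K%:R * (p kk / p k)) / d) => _ g Gg.
  have hx : 0 < e / K%:R * (p kk / p k) by rewrite mulr_gt0 // divr_gt0.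
  have : g * d <= ln (e / K%:R * (p kk / p k)).
    by move: Gg; rewrite ler_ndivrMr // => /(ler_wnM2r (ltW d0)); rewrite mulrVK // unitfE lt_eqF.
  move=> h0; have h : expR (g * d) <= e / K%:R * (p kk / p k).
    by rewrite -[X in _ <= X]lnK ?posrE // ler_expR.
  rewrite -(ler_pM2r (_ : 0 < p kk / p k)) ?divr_gt0 //.
  apply: le_trans h; rewrite /d le_eqVlt; apply/orP; left; apply/eqP.
  field; rewrite !gt_eqF //.
have [Gf hGf] := choice hG.
exists (\sum_k `|Gf k|) => g Gg.
have h1 : 1 - tilt q p (s * g) kk = \sum_(k < K | k != kk) tilt q p (s * g) k.
  by rewrite -(sum_tilt hp hq K0 (s * g)) // (bigD1 kk) //= addrC addrK.
rewrite h1.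
apply: le_trans (_ : \sum_(k < K | k != kk) (e / K%:R) <= _); last first.
  rewrite big_mkcond /= (le_trans (_ : _ <= \sum_(k < K) e / K%:R)) //.
    by apply: ler_sum => k _; case: ifP => // _; rewrite ltW.
  by rewrite sumr_const card_ord -[_ *+ K]mulr_natr -mulrA mulVf ?mulr1 // pnatr_eq0 -lt0n.
apply: ler_sum => k kk'.
apply: le_trans (hGf k kk' g _); last first.
  apply: le_trans Gg; apply: le_trans (ler_norm _) _.
  by rewrite (bigD1 k) //= lerDl sumr_ge0.
rewrite tiltE // ler_pdivrMr ?Zs_gt0 //.
set ek := expR _; set ekk := expR (s * g * ln (q kk)).
have -> : expR (g * (s * (ln (q k) - ln (q kk)))) = ek / ekk.
  by rewrite -expRB /ek /ekk; congr expR; ring.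
have Zge : p kk * ekk <= Zs p q (s * g).
  by rewrite /Zs (bigD1 kk) //= lerDl sumr_ge0 // => j _; rewrite mulr_ge0 ?expR_ge0 // ltW.
apply: le_trans (_ : p k / p kk * (ek / ekk) * (p kk * ekk) <= _).
  rewrite le_eqVlt; apply/orP; left; apply/eqP.
  field; rewrite !gt_eqF ?expR_gt0 //.
by rewrite ler_wpM2l // mulr_ge0 ?divr_ge0 ?expR_ge0 ?ltW.
Qed.

End Lim.
Section Seq.
Variable R : realType.
Local Open Scope ereal_scope.

Definition useq (P : nat -> R) : nat -> \bar R :=
  fun n => ((n.+1%:R^-1)%:E * elog (P n)).

Lemma elog_pos (x : R) : (0 < x)%R -> elog x = (ln x)%:E.
Proof. by move=> x0; rewrite /elog gt_eqF. Qed.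

Lemma limn_esup_le_esups (u : nat -> \bar R) N : limn_esup u <= esups u N.
Proof.
rewrite limn_esup_lim (cvg_lim _ (@cvg_esups_inf R u)) //.
by apply: ereal_inf_lbound; exists N.
Qed.

Lemma esup_le_ev (u : nat -> \bar R) (x : R) :
  (forall e, (0 < e)%R -> exists N, forall n, (N <= n)%N -> u n <= (x + e)%:E) ->
  limn_esup u <= x%:E.
Proof.
move=> h; apply/lee_addgt0Pr => e e0; have [N hN] := h e e0.
apply: le_trans (limn_esup_le_esups u N) _.
apply: ge_ereal_sup => _ [n /= Nn <-].
by rewrite -EFinD; apply: hN.
Qed.

Lemma einf_ge_ev (u : nat -> \bar R) (x : R) :
  (forall e, (0 < e)%R -> exists N, forall n, (N <= n)%N -> (x - e)%:E <= u n) ->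
  x%:E <= limn_einf u.
Proof.
move=> h; rewrite /limn_einf leeNr -EFinN.
apply: esup_le_ev => e e0; have [N hN] := h e e0; exists N => n Nn.
by rewrite leeNl -EFinN opprD opprK; apply: hN.
Qed.

Lemma small_inv (A e : R) : (0 < e)%R -> exists N, forall n, (N <= n)%N ->
  (`|A| / n.+1%:R <= e)%R.
Proof.
move=> e0; exists (Num.bound (`|A| / e)) => n Nn.
have h1 : (`|A| / e < (Num.bound (`|A| / e))%:R)%R.
  by apply: archi_boundP; rewrite divr_ge0 // ltW.
have h2 : ((Num.bound (`|A| / e))%:R <= n.+1%:R :> R)%R.
  by rewrite ler_nat (leq_trans Nn).
rewrite ler_pdivrMr ?ltr0n //.
move: h1; rewrite ltr_pdivrMr // => h1.
have : (0 <= e)%R by apply: ltW.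
nra.
Qed.

Lemma UB_seq (P : nat -> R) (C c : R) : (0 < C)%R ->
  (forall n, (0 <= P n)%R /\ (P n <= C * expR (- (n.+1%:R * c)))%R) ->
  limn_esup (useq P) <= (- c)%:E.
Proof.
move=> C0 hP; apply: esup_le_ev => e e0.
have [N hN] := small_inv (ln C) e0; exists N => n Nn.
have [P0 P1] := hP n; rewrite /useq.
case: (eqVneq (P n) 0%R) => [->|Pn0].
  by rewrite /elog eqxx gt0_muleNy ?leNye // lte_fin invr_gt0 ltr0n.
have Ppos : (0 < P n)%R by rewrite lt_neqAle eq_sym Pn0.
rewrite elog_pos // -EFinM lee_fin.
have : (ln (P n) <= ln C - n.+1%:R * c)%R.
  have : (ln (P n) <= ln (C * expR (- (n.+1%:R * c))))%R.
    by rewrite ler_ln ?posrE ?mulr_gt0 ?expR_gt0.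
  by rewrite lnM ?posrE ?expR_gt0 // expRK.
move=> h.
have hN' := hN n Nn.
have n0 : (0 < n.+1%:R :> R)%R by rewrite ltr0n.
rewrite mulrC ler_pdivrMr //.
have : (ln C <= `|ln C|)%R by apply: ler_norm.
move: hN'; rewrite ler_pdivrMr // => hh; nra.
Qed.

Lemma LB_seq (P : nat -> R) (C c : R) N0 : (0 < C)%R ->
  (forall n, (N0 <= n)%N -> (C * expR (- (n.+1%:R * c)) <= P n)%R) ->
  (- c)%:E <= limn_einf (useq P).
Proof.
move=> C0 hP; apply: einf_ge_ev => e e0.
have [N hN] := small_inv (ln C) e0; exists (maxn N N0) => n.
rewrite geq_max => /andP[Nn N0n].
have P1 := hP n N0n.
have Ppos : (0 < P n)%R by apply: lt_le_trans P1; rewrite mulr_gt0 ?expR_gt0.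
rewrite /useq elog_pos // -EFinM lee_fin.
have : (ln C - n.+1%:R * c <= ln (P n))%R.
  have : (ln (C * expR (- (n.+1%:R * c))) <= ln (P n))%R.
    by rewrite ler_ln ?posrE ?mulr_gt0 ?expR_gt0.
  by rewrite lnM ?posrE ?expR_gt0 // expRK.
move=> h.
have hN' := hN n Nn.
have n0 : (0 < n.+1%:R :> R)%R by rewrite ltr0n.
rewrite mulrC ler_pdivlMr //.
have : (- ln C <= `|ln C|)%R by rewrite -normrN ler_norm.
move: hN'; rewrite ler_pdivrMr // => hh; nra.
Qed.

End Seq.
Section SumIf.
Variable R : realType.
Variable T : finType.

Lemma sum_if_le (P Q : pred T) (w : T -> R) : (forall y, 0 <= w y) ->
  (forall y, P y -> Q y) ->
  \sum_y (if P y then w y else 0) <= \sum_y (if Q y then w y else 0).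
Proof.
move=> w0 PQ; apply: ler_sum => y _; case: ifP => Py; first by rewrite PQ.
by case: ifP.
Qed.

Lemma sum_if_split (P Q1 Q2 : pred T) (w : T -> R) : (forall y, 0 <= w y) ->
  (forall y, P y -> Q1 y || Q2 y) ->
  \sum_y (if P y then w y else 0) <=
  \sum_y (if Q1 y then w y else 0) + \sum_y (if Q2 y then w y else 0).
Proof.
move=> w0 PQ; rewrite -big_split /=; apply: ler_sum => y _.
case: ifP => Py; last by rewrite addr_ge0 //; case: ifP.
by move: (PQ y Py); case: (Q1 y); case: (Q2 y) => //= _; rewrite ?addr0 ?add0r // lerDl.
Qed.

Lemma sum_if_ge1 (P : pred T) (w : T -> R) y0 : (forall y, 0 <= w y) -> P y0 ->
  w y0 <= \sum_y (if P y then w y else 0).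
Proof.
move=> w0 Py0; rewrite (bigD1 y0) //= Py0 lerDl.
by apply: sumr_ge0 => y _; case: ifP.
Qed.

Lemma sum_if_single (P : pred T) (w : T -> R) y0 : (forall y, 0 <= w y) ->
  (forall y, P y -> y = y0) ->
  \sum_y (if P y then w y else 0) <= w y0.
Proof.
move=> w0 hP; rewrite (bigD1 y0) //= big1 ?addr0.
  by case: ifP.
by move=> y yy0; case: ifP => // /hP e; move: yy0; rewrite e eqxx.
Qed.

Lemma sum_if_le_total (P : pred T) (w : T -> R) : (forall y, 0 <= w y) ->
  \sum_y (if P y then w y else 0) <= \sum_y w y.
Proof. by move=> w0; apply: ler_sum => y _; case: ifP. Qed.

End SumIf.
Section Main.
Variable R : realType.
Variable K : nat.
Variables p q : 'I_K -> R.
Hypothesis hp : forall k, 0 < p k.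
Hypothesis hq : forall k, 0 < q k.
Hypothesis hqd : forall j k : 'I_K, j != k -> q j != q k.
Hypothesis K2 : (2 <= K)%N.
Variables kmax kmin : 'I_K.
Hypothesis hmax : forall k, q k <= q kmax.
Hypothesis hmin : forall k, q kmin <= q k.

Let K0 : (0 < K)%N. Proof. by apply: leq_trans K2. Qed.

Local Notation T := (tilt q p).
Local Notation c := (cc q).
Local Notation f := (ff p q).
Local Notation L := (LL p q).

Lemma qmin_lt_qmax : q kmin < q kmax.
Proof.
have K1 : (1 < K)%N by [].
pose k0 := Ordinal K0; pose k1 := Ordinal K1.
have : k0 != k1 by [].
move=> /hqd; rewrite lt_neqAle hmin andbT; apply: contra => /eqP e.
have e0 : q k0 = q kmax by apply/le_anti; rewrite hmax -e hmin.
have e1 : q k1 = q kmax by apply/le_anti; rewrite hmax -e hmin.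
by rewrite e0 e1.
Qed.

Lemma kmin_neq_kmax : kmin != kmax.
Proof. by apply/eqP => e; have := qmin_lt_qmax; rewrite e ltxx. Qed.

Definition aa := c kmax.
Definition bb := c kmin.

Lemma aa_le k : aa <= c k.
Proof. by rewrite /aa !ccE // lerN2 ler_ln ?posrE. Qed.

Lemma le_bb k : c k <= bb.
Proof. by rewrite /bb !ccE // lerN2 ler_ln ?posrE. Qed.

Lemma aa_lt k : k != kmax -> aa < c k.
Proof.
move=> kk; rewrite /aa !ccE // ltrN2 ltr_ln ?posrE // lt_neqAle hmax andbT.
exact: hqd.
Qed.

Lemma lt_bb k : k != kmin -> c k < bb.
Proof.
move=> kk; rewrite /bb !ccE // ltrN2 ltr_ln ?posrE // lt_neqAle hmin andbT eq_sym.
exact: hqd.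
Qed.

Lemma aa_lt_bb : aa < bb.
Proof. by apply: aa_lt; exact: kmin_neq_kmax. Qed.

Lemma ff_sub g x : f g - x = \sum_k T g k * (c k - x).
Proof.
under eq_bigr => k _ do rewrite mulrBr.
by rewrite sumrB -mulr_suml sum_tilt // mul1r.
Qed.

Lemma ff_gt g : aa < f g.
Proof.
rewrite -subr_gt0 ff_sub (bigD1 kmin) //= ltr_wpDr //.
  by apply: sumr_ge0 => k _; rewrite mulr_ge0 ?subr_ge0 ?aa_le // ltW // tilt_gt0.
by rewrite mulr_gt0 ?tilt_gt0 // subr_gt0 aa_lt // kmin_neq_kmax.
Qed.

Lemma ff_lt g : f g < bb.
Proof.
rewrite -subr_lt0 ff_sub (bigD1 kmax) //= ltr_wnDr //.
  by apply: sumr_le0 => k _; rewrite mulr_ge0_le0 ?subr_le0 ?le_bb // ltW // tilt_gt0.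
by rewrite pmulr_rlt0 ?tilt_gt0 // subr_lt0 lt_bb // eq_sym kmin_neq_kmax.
Qed.

Lemma tilt_neq b g : b != g -> exists k, T b k != T g k.
Proof.
move=> bg; case: (pselect (exists k, T b k != T g k)) => // hn; exfalso.
have h k : T b k = T g k.
  by case: (eqVneq (T b k) (T g k)) => // ne; exfalso; apply: hn; exists k.
have e k : (g - b) * c k + L g - L b = 0.
  rewrite -ln_tilt_ratio // h.
  by rewrite divff ?ln1 // gt_eqF // tilt_gt0.
have := e kmax; have := e kmin => e1 e2.
have : (g - b) * (bb - aa) = 0 by rewrite /aa /bb; lra.
move/eqP; rewrite mulf_eq0 subr_eq0 (eq_sym g) (negbTE bg) /= subr_eq0.
by rewrite gt_eqF // aa_lt_bb.
Qed.

Lemma KL_ge0 b g : 0 <= KL (T b) (T g).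
Proof.
apply: gibbs; try (move=> k; apply: tilt_gt0 => //).
by rewrite !sum_tilt.
Qed.

Lemma KL_gt0 b g : b != g -> 0 < KL (T b) (T g).
Proof.
move=> bg; apply: gibbs_strict; try (move=> k; apply: tilt_gt0 => //).
  by rewrite !sum_tilt.
exact: tilt_neq.
Qed.

Lemma ff_decr b1 b2 : b1 < b2 -> f b2 < f b1.
Proof.
move=> b12.
have h1 : 0 < KL (T b1) (T b2) by apply: KL_gt0; rewrite lt_eqF.
have h2 : 0 < KL (T b2) (T b1) by apply: KL_gt0; rewrite eq_sym lt_eqF.
rewrite !KL_tilt // in h1 h2.
have : 0 < (b2 - b1) * (f b1 - f b2) by lra.
by rewrite pmulr_rgt0 ?subr_gt0.
Qed.

Lemma tilt_kmax_lim e : 0 < e -> exists G, forall g, G <= g -> 1 - T g kmax <= e.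
Proof.
move=> e0; have [|G hG] := @tilt_lim R K p q hp hq K0 kmax 1 _ e e0.
  move=> k kk; rewrite mul1r subr_lt0 ltr_ln ?posrE // lt_neqAle hmax andbT.
  exact: hqd.
by exists G => g Gg; have := hG g Gg; rewrite mul1r.
Qed.

Lemma tilt_kmin_lim e : 0 < e -> exists G, forall g, g <= G -> 1 - T g kmin <= e.
Proof.
move=> e0; have [|G hG] := @tilt_lim R K p q hp hq K0 kmin (-1) _ e e0.
  move=> k kk; rewrite mulN1r oppr_lt0 subr_gt0 ltr_ln ?posrE // lt_neqAle hmin andbT.
  by rewrite eq_sym; exact: hqd.
exists (- G) => g Gg; have := hG (- g); rewrite lerNr => /(_ Gg).
by rewrite mulN1r opprK.
Qed.

Lemma ff_near_aa g : f g - aa <= (bb - aa) * (1 - T g kmax).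
Proof.
rewrite ff_sub (bigD1 kmax) //= subrr mulr0 add0r.
rewrite (_ : 1 - T g kmax = \sum_(k < K | k != kmax) T g k); last first.
  by rewrite -(sum_tilt hp hq K0 g) (bigD1 kmax) //= addrC addrK.
rewrite mulr_sumr.
apply: ler_sum => k _; rewrite mulrC; apply: ler_wpM2r; first by rewrite ltW // tilt_gt0.
by have := le_bb k; lra.
Qed.

Lemma ff_near_bb g : bb - f g <= (bb - aa) * (1 - T g kmin).
Proof.
rewrite -opprB ff_sub (bigD1 kmin) //= subrr mulr0 add0r -sumrN.
rewrite (_ : 1 - T g kmin = \sum_(k < K | k != kmin) T g k); last first.
  by rewrite -(sum_tilt hp hq K0 g) (bigD1 kmin) //= addrC addrK.
rewrite mulr_sumr.
apply: ler_sum => k _; rewrite -mulrN mulrC; apply: ler_wpM2r; first by rewrite ltW // tilt_gt0.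
by have := aa_le k; lra.
Qed.

Lemma ff_range : range f = `]aa, bb[%classic.
Proof.
apply/seteqP; split.
  by move=> _ [g _ <-] /=; rewrite in_itv /= ff_gt ff_lt.
move=> t /=; rewrite in_itv /= => /andP[ta tb].
have ba : 0 < bb - aa by rewrite subr_gt0 aa_lt_bb.
have e1 : 0 < (t - aa) / (2 * (bb - aa)) by rewrite divr_gt0 ?mulr_gt0 // subr_gt0.
have e2 : 0 < (bb - t) / (2 * (bb - aa)) by rewrite divr_gt0 ?mulr_gt0 // subr_gt0.
have [G1 hG1] := tilt_kmax_lim e1.
have [G2 hG2] := tilt_kmin_lim e2.
have f1 : f G1 < t.
  have := ff_near_aa G1; have := hG1 G1 (lexx _).
  move=> /(ler_wpM2l (ltW ba)) h1 h2.
  have : (bb - aa) * ((t - aa) / (2 * (bb - aa))) = (t - aa) / 2.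
    by field; rewrite gt_eqF.
  lra.
have f2 : t < f G2.
  have := ff_near_bb G2; have := hG2 G2 (lexx _).
  move=> /(ler_wpM2l (ltW ba)) h1 h2.
  have : (bb - aa) * ((bb - t) / (2 * (bb - aa))) = (bb - t) / 2.
    by field; rewrite gt_eqF.
  lra.
have G21 : G2 <= G1.
  rewrite leNgt; apply/negP => /ff_decr h; lra.
have hc : {within `[G2, G1], continuous f}.
  by apply: continuous_subspaceT => x; apply: ff_continuous.
have hm : Num.min (f G2) (f G1) <= t <= Num.max (f G2) (f G1).
  by rewrite ge_min le_max (ltW f1) (ltW f2) orbT.
have [x _ fx] := @IVT R f G2 G1 t G21 hc hm.
by exists x.
Qed.
Definition ww (th : R) (m : nat) (y : {ffun 'I_m -> 'I_K}) : R :=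
  \prod_(i < m) T th (y i).
Definition SS (m : nat) (y : {ffun 'I_m -> 'I_K}) : R := \sum_(i < m) c (y i).

Lemma ww_ge0 th m (y : {ffun 'I_m -> 'I_K}) : 0 <= ww th y.
Proof. by apply: prodr_ge0 => i _; rewrite ltW // tilt_gt0. Qed.

Lemma sum_ww th m : \sum_(y : {ffun 'I_m -> 'I_K}) ww th y = 1.
Proof.
rewrite /ww -(bigA_distr_bigA (fun (_ : 'I_m) k => T th k)) /=.
by under eq_bigr do rewrite sum_tilt //; rewrite prodr_const expr1n.
Qed.

Lemma tilt_change th b k : T th k = T b k * expR (- MM p q th b (c k)).
Proof.
have h1 := tilt_gt0 hp hq K0 b k; have h2 := tilt_gt0 hp hq K0 th k.
have h3 : 0 < T b k / T th k by rewrite divr_gt0.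
rewrite /MM -ln_tilt_ratio // -lnV ?posrE // lnK ?posrE ?invr_gt0 //.
by rewrite invf_div mulrC mulfVK // gt_eqF.
Qed.

Lemma sumMM th b m (y : {ffun 'I_m -> 'I_K}) :
  \sum_(i < m) MM p q th b (c (y i)) = (th - b) * SS y + m%:R * (L th - L b).
Proof.
rewrite /MM /SS mulr_sumr.
have -> : m%:R * (L th - L b) = \sum_(i < m) (L th - L b).
  by rewrite sumr_const card_ord mulr_natl.
by rewrite -big_split /=; apply: eq_bigr => i _; rewrite -addrA.
Qed.

Lemma ww_change th b m (y : {ffun 'I_m -> 'I_K}) :
  ww th y = ww b y * expR (- ((th - b) * SS y + m%:R * (L th - L b))).
Proof.
rewrite -sumMM -sumrN expR_sum /ww -big_split /=.
by apply: eq_bigr => i _; rewrite (tilt_change th b).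
Qed.

Lemma chernoff th b s m :
  \sum_(y : {ffun 'I_m -> 'I_K})
     (if 0 <= (th - b) * (SS y - m%:R * s) then ww th y else 0)
  <= expR (- (m%:R * MM p q th b s)).
Proof.
apply: le_trans (_ : \sum_(y : {ffun 'I_m -> 'I_K})
   ww b y * expR (- (m%:R * MM p q th b s)) <= _); last first.
  by rewrite -mulr_suml sum_ww mul1r.
apply: ler_sum => y _; case: ifP => h; last first.
  by rewrite mulr_ge0 ?ww_ge0 ?expR_ge0.
rewrite (ww_change th b) ler_wpM2l ?ww_ge0 // ler_expR lerN2 /MM.
move: h; rewrite mulrBr; lra.
Qed.

Lemma lower_change a b t e m (y : {ffun 'I_m -> 'I_K}) :
  `|SS y - m%:R * t| < m%:R * e ->
  expR (- (m%:R * (MM p q a b t + `|a - b| * e))) * ww b y <= ww a y.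
Proof.
move=> h; rewrite (ww_change a b) mulrC ler_wpM2l ?ww_ge0 // ler_expR lerN2 /MM.
have : (a - b) * (SS y - m%:R * t) <= `|a - b| * (m%:R * e).
  apply: le_trans (ler_norm _) _; rewrite normrM ler_wpM2l //.
  exact: ltW.
lra.
Qed.
Lemma MM_diff a b g s : MM p q a b s - MM p q a g s = MM p q g b s.
Proof. by rewrite /MM; ring. Qed.

Lemma MM_self a s : MM p q a a s = 0.
Proof. by rewrite /MM; ring. Qed.

Lemma MM_end g a k : MM p q a g (c k) = ln (T g k) + ln (T a k)^-1.
Proof.
rewrite /MM -ln_tilt_ratio // lnM ?posrE ?invr_gt0 ?tilt_gt0 //.
Qed.

Lemma MM_end_le g a k : MM p q a g (c k) <= ln (T a k)^-1.
Proof.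
rewrite MM_end gerDr ln_le0 //; exact: tilt_le1.
Qed.

Lemma ln_inv_ge0 a k : 0 <= ln (T a k)^-1.
Proof.
by rewrite ln_ge0 // invf_ge1 ?tilt_le1 ?tilt_gt0.
Qed.

Section WithJ.
Variable alpha : R.
Variable J : R -> \bar R.
Hypothesis hJ : forall t beta : R, aa < t < bb -> f beta = t ->
  J t = (KL (T beta) (T alpha))%:E.
Hypothesis hJa : J aa = (ln (T alpha kmax)^-1)%:E.
Hypothesis hJb : J bb = (ln (T alpha kmin)^-1)%:E.
Hypothesis hJo : forall t, t < aa \/ bb < t -> J t = +oo%E.

Lemma J_int t : aa < t < bb -> exists beta, f beta = t /\ J t = (MM p q alpha beta t)%:E.
Proof.
move=> ht; have : range f t by rewrite ff_range /= in_itv.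
move=> [beta _ fb]; exists beta; split => //.
by rewrite (hJ ht fb) KL_tilt_MM // fb.
Qed.

Lemma J_mid : J (f alpha) = 0%:E.
Proof.
by rewrite (hJ _ (erefl _)) ?ff_gt ?ff_lt // KL_tilt_MM // MM_self.
Qed.

Lemma J_minor g t : ((MM p q alpha g t)%:E <= J t)%E.
Proof.
case: (ltP t aa) => [ta|].
  by rewrite hJo ?leey //; left.
rewrite le_eqVlt => /orP[/eqP ta|ta].
  by rewrite -ta hJa lee_fin MM_end_le.
case: (ltP t bb) => [tb|].
  have [beta [fb ->]] := J_int (ltac:(by rewrite ta tb) : aa < t < bb).
  rewrite lee_fin -subr_ge0 MM_diff -fb -KL_tilt_MM //; exact: KL_ge0.
rewrite le_eqVlt => /orP[/eqP tb|tb].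
  by rewrite -tb hJb lee_fin MM_end_le.
by rewrite hJo ?leey //; right.
Qed.

Lemma J_ge0 t : (0 <= J t)%E.
Proof. by apply: le_trans (J_minor alpha t); rewrite MM_self. Qed.

Lemma J_fin t : aa <= t <= bb -> exists v, J t = v%:E.
Proof.
move=> /andP[ta tb].
case: (eqVneq t aa) => [->|ta']; first by rewrite hJa; eexists.
case: (eqVneq t bb) => [->|tb']; first by rewrite hJb; eexists.
have h : aa < t < bb by rewrite !lt_neqAle ta tb eq_sym ta' tb'.
by have [beta [_ ->]] := J_int h; eexists.
Qed.

Lemma end_claim k r : r < ln (T alpha k)^-1 ->
  (forall e, 0 < e -> exists g, 1 - T g k <= e) ->
  exists g, r < MM p q alpha g (c k).
Proof.
move=> hr hlim.
set eta := ln (T alpha k)^-1 - r.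
have eta0 : 0 < eta by rewrite subr_gt0.
have ex1 : expR (- eta) < 1 by rewrite expR_lt1 oppr_lt0.
have [g hg] := hlim ((1 - expR (- eta)) / 2) (ltac:(by rewrite divr_gt0 // subr_gt0)).
exists g; rewrite MM_end.
have : expR (- eta) < T g k by lra.
move=> h.
have : - eta < ln (T g k).
  rewrite -[X in X < _](expRK (- eta)) ltr_ln ?posrE ?expR_gt0 //.
  exact: tilt_gt0.
rewrite /eta; lra.
Qed.

Lemma J_claim x r : aa <= x <= bb -> (r%:E < J x)%E -> exists g, r < MM p q alpha g x.
Proof.
move=> /andP[ta tb] hr.
case: (eqVneq x aa) => [xa|ta'].
  subst x; rewrite hJa lte_fin in hr.
  apply: end_claim => // e e0; have [G hG] := tilt_kmax_lim e0.
  by exists G; apply: hG.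
case: (eqVneq x bb) => [xb|tb'].
  subst x; rewrite hJb lte_fin in hr.
  apply: end_claim => // e e0; have [G hG] := tilt_kmin_lim e0.
  by exists G; apply: hG.
have h : aa < x < bb by rewrite !lt_neqAle ta tb eq_sym ta' tb'.
have [beta [_ hb]] := J_int h.
by exists beta; rewrite hb lte_fin in hr.
Qed.

Lemma J_lsc : lower_semicontinuous J.
Proof.
move=> x r hr.
case: (ltP x aa) => [xa|ax].
  exists (ball x (aa - x)); first by apply: nbhsx_ballx; rewrite subr_gt0.
  move=> y; rewrite /ball /= => hy.
  rewrite hJo ?ltey //; left.
  have := ler_norm (y - x); rewrite distrC in hy; lra.
case: (ltP bb x) => [bx|xb].
  exists (ball x (x - bb)); first by apply: nbhsx_ballx; rewrite subr_gt0.
  move=> y; rewrite /ball /= => hy.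
  rewrite hJo ?ltey //; right.
  have := ler_norm (x - y); lra.
have hx : aa <= x <= bb by apply/andP; split.
have [g hg] := J_claim hx hr.
set d := (MM p q alpha g x - r) / (`|alpha - g| + 1).
have d0 : 0 < d by rewrite divr_gt0 ?subr_gt0 // ltr_pwDr.
exists (ball x d); first exact: nbhsx_ballx.
move=> y; rewrite /ball /= => hy.
apply: lt_le_trans (J_minor g y); rewrite lte_fin.
have e1 : MM p q alpha g y - MM p q alpha g x = (alpha - g) * (y - x) by rewrite /MM; ring.
have e2 : `|(alpha - g) * (y - x)| <= `|alpha - g| * d.
  by rewrite normrM ler_wpM2l // distrC ltW.
have e3 : `|alpha - g| * d < MM p q alpha g x - r.
  rewrite /d mulrA ltr_pdivrMr ?ltr_pwDr //.
  have h0 : 0 < MM p q alpha g x - r by rewrite subr_gt0.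
  have h1 := normr_ge0 (alpha - g).
  nra.
have := ler_norm (- ((alpha - g) * (y - x))); rewrite normrN.
lra.
Qed.

Lemma J_compact (v : R) : compact [set t | (J t <= v%:E)%E].
Proof.
apply: (@subclosed_compact _ _ `[aa, bb]); last 2 first.
- exact: segment_compact.
- move=> t /= ht; rewrite in_itv /=.
  case: (ltP t aa) => [ta|ta]; first by rewrite hJo ?leey in ht; [|left].
  case: (ltP bb t) => [tb|tb]; first by rewrite hJo ?leey in ht; [|right].
  by apply/andP; split.
have -> : [set t | (J t <= v%:E)%E] = ~` [set t | (v%:E < J t)%E].
  by apply/seteqP; split => t /=; rewrite leNgt => /negP.
apply: open_closedC.
by move: J_lsc; rewrite lower_semicontinuousP.
Qed.
Lemma ln_prod (I : Type) (s : seq I) (F : I -> R) : (forall i, 0 < F i) ->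
  ln (\prod_(i <- s) F i) = \sum_(i <- s) ln (F i).
Proof.
move=> F0; elim: s => [|i s IH]; first by rewrite !big_nil ln1.
rewrite !big_cons lnM ?posrE ?IH //; apply: prodr_gt0 => j _; exact: F0.
Qed.

Lemma negrewardE m (y : {ffun 'I_m -> 'I_K}) : negreward q y = m%:R^-1 * SS y.
Proof.
rewrite /negreward ln_prod // /SS -mulrN -sumrN.
by congr (_ * _); apply: eq_bigr => i _; rewrite ccE.
Qed.

Lemma SS_ge m (y : {ffun 'I_m -> 'I_K}) : m%:R * aa <= SS y.
Proof.
rewrite (_ : m%:R * aa = \sum_(i < m) aa); last by rewrite sumr_const card_ord mulr_natl.
by apply: ler_sum => i _; exact: aa_le.
Qed.

Lemma SS_le m (y : {ffun 'I_m -> 'I_K}) : SS y <= m%:R * bb.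
Proof.
rewrite (_ : m%:R * bb = \sum_(i < m) bb); last by rewrite sumr_const card_ord mulr_natl.
by apply: ler_sum => i _; exact: le_bb.
Qed.

Lemma ww_const th m k : ww th ([ffun => k] : {ffun 'I_m -> 'I_K}) = T th k ^+ m.
Proof.
by rewrite /ww (eq_bigr (fun=> T th k)) ?prodr_const ?card_ord // => i _; rewrite ffunE.
Qed.

Lemma SS_const m k : SS ([ffun => k] : {ffun 'I_m -> 'I_K}) = m%:R * c k.
Proof.
by rewrite /SS (eq_bigr (fun=> c k)) ?sumr_const ?card_ord ?mulr_natl // => i _; rewrite ffunE.
Qed.

Lemma expR_pow th k m : expR (- (m%:R * ln (T th k)^-1)) = T th k ^+ m.
Proof.
rewrite lnV ?posrE ?tilt_gt0 // mulrN opprK expRM_natl lnK // posrE.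
exact: tilt_gt0.
Qed.

Lemma const_aa m (y : {ffun 'I_m -> 'I_K}) : SS y <= m%:R * aa -> y = [ffun => kmax].
Proof.
move=> h.
have h0 : \sum_(i < m) (c (y i) - aa) = 0.
  apply/le_anti/andP; split; last by apply: sumr_ge0 => i _; rewrite subr_ge0 aa_le.
  rewrite sumrB sumr_const card_ord -mulr_natl subr_le0; exact: h.
apply/ffunP => i; rewrite ffunE.
have hge : forall j : 'I_m, true -> 0 <= c (y j) - aa by move=> j _; rewrite subr_ge0 aa_le.
have := (psumr_eq0P hge h0) i isT.
move/eqP; rewrite subr_eq0 => /eqP e.
case: (eqVneq (y i) kmax) => // ne; have := aa_lt ne; by rewrite e ltxx.
Qed.
Lemma const_bb m (y : {ffun 'I_m -> 'I_K}) : m%:R * bb <= SS y -> y = [ffun => kmin].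
Proof.
move=> h.
have h0 : \sum_(i < m) (bb - c (y i)) = 0.
  apply/le_anti/andP; split; last by apply: sumr_ge0 => i _; rewrite subr_ge0 le_bb.
  rewrite sumrB sumr_const card_ord -mulr_natl subr_le0; exact: h.
apply/ffunP => i; rewrite ffunE.
have hge : forall j : 'I_m, true -> 0 <= bb - c (y j) by move=> j _; rewrite subr_ge0 le_bb.
have := (psumr_eq0P hge h0) i isT.
move/eqP; rewrite subr_eq0 => /eqP e.
by case: (eqVneq (y i) kmin) => // ne; have := lt_bb ne; rewrite e ltxx.
Qed.

Lemma left_side m s v : (0 < m)%N -> aa <= s < f alpha -> J s = v%:E ->
  \sum_(y : {ffun 'I_m -> 'I_K}) (if SS y <= m%:R * s then ww alpha y else 0)
  <= expR (- (m%:R * v)).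
Proof.
move=> m0 /andP[sa sm] Js.
case: (eqVneq s aa) => [esa|nsa].
  move: Js; rewrite esa hJa => -[<-]; rewrite expR_pow.
  rewrite -(ww_const alpha m kmax).
  apply: sum_if_single => [y|y]; first exact: ww_ge0.
  exact: const_aa.
have hs : aa < s < bb.
  by rewrite lt_neqAle eq_sym nsa sa /= (lt_trans sm) // ff_lt.
have [beta [fb Jb]] := J_int hs.
move: Js; rewrite Jb => -[<-].
have ab : alpha < beta.
  rewrite ltNge; apply/negP; rewrite le_eqVlt => /orP[/eqP e|/ff_decr h].
    by move: sm; rewrite -fb e ltxx.
  by move: sm; rewrite -fb => h'; have := lt_trans h h'; rewrite ltxx.
apply: le_trans (chernoff alpha beta s m).
apply: sum_if_le => [y|y]; first exact: ww_ge0.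
by move=> h; rewrite mulr_le0 // subr_le0 // ltW.
Qed.

Lemma right_side m s v : (0 < m)%N -> f alpha < s <= bb -> J s = v%:E ->
  \sum_(y : {ffun 'I_m -> 'I_K}) (if m%:R * s <= SS y then ww alpha y else 0)
  <= expR (- (m%:R * v)).
Proof.
move=> m0 /andP[ms sb] Js.
case: (eqVneq s bb) => [esb|nsb].
  move: Js; rewrite esb hJb => -[<-]; rewrite expR_pow.
  rewrite -(ww_const alpha m kmin).
  apply: sum_if_single => [y|y]; first exact: ww_ge0.
  exact: const_bb.
have hs : aa < s < bb.
  by rewrite [s < bb]lt_neqAle nsb sb (lt_trans _ ms) // ff_gt.
have [beta [fb Jb]] := J_int hs.
move: Js; rewrite Jb => -[<-].
have ab : beta < alpha.
  rewrite ltNge; apply/negP; rewrite le_eqVlt => /orP[/eqP e|/ff_decr h].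
    by move: ms; rewrite -fb e ltxx.
  by move: ms; rewrite -fb => h'; have := lt_trans h h'; rewrite ltxx.
apply: le_trans (chernoff alpha beta s m).
apply: sum_if_le => [y|y]; first exact: ww_ge0.
by move=> h; rewrite mulr_ge0 // subr_ge0 // ltW.
Qed.
Lemma sup_in (A : set R) : closed A -> A !=set0 -> has_ubound A -> A (sup A).
Proof.
move=> cA A0 ub; have := closure_sup A0 ub.
by rewrite -(proj1 (closure_id A) cA).
Qed.

Lemma Zf_bounds m (y : {ffun 'I_m -> 'I_K}) : (0 < m)%N -> aa <= m%:R^-1 * SS y <= bb.
Proof.
move=> m0; have m0' : 0 < m%:R :> R by rewrite ltr0n.
rewrite ler_pdivlMl // ler_pdivrMl //.
by rewrite SS_ge SS_le.
Qed.

Lemma UB_L (F : set R) I' m : closed F -> ~ F (f alpha) -> (0 < m)%N ->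
  (forall s v, F s -> J s = v%:E -> I' <= v) ->
  \sum_(y : {ffun 'I_m -> 'I_K})
     (if (m%:R^-1 * SS y \in F) && (m%:R^-1 * SS y < f alpha) then ww alpha y else 0)
  <= expR (- (m%:R * I')).
Proof.
move=> Fc Fm0 m0 hI.
have m0' : 0 < m%:R :> R by rewrite ltr0n.
set A1 := F `&` ([set x | aa <= x] `&` [set x | x <= f alpha]).
have A1c : closed A1 by apply: closedI => //; apply: closedI; [exact: closed_ge|exact: closed_le].
have A1ub : has_ubound A1 by exists (f alpha) => x [_ [_ /= h]].
case: (pselect (A1 !=set0)) => [A10|A10]; last first.
  rewrite big1 ?expR_ge0 // => y _; case: ifP => // /andP[].
  rewrite inE => FZ Zm; exfalso; apply: A10; exists (m%:R^-1 * SS y).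
  split => //; split => /=; [by case/andP: (Zf_bounds y m0)|exact: ltW].
have := sup_in A1c A10 A1ub; move=> [Fs [/= s1a s1m]].
have s1m' : sup A1 < f alpha.
  by rewrite lt_neqAle s1m andbT; apply/eqP => e; apply: Fm0; rewrite -e.
have hb1 : aa <= sup A1 <= bb.
  apply/andP; split; first exact: s1a.
  by apply: le_trans s1m _; apply: ltW; apply: ff_lt.
have [v Jv] := J_fin hb1.
have hb2 : aa <= sup A1 < f alpha by apply/andP; split.
apply: le_trans (_ : _ <= expR (- (m%:R * v))) _.
  apply: le_trans (left_side m0 hb2 Jv).
  apply: sum_if_le => [y|y]; first exact: ww_ge0.
  move=> /andP[]; rewrite inE => FZ Zm.
  have : m%:R^-1 * SS y <= sup A1.
    apply: sup_upper_bound; first by split.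
    split => //; split => /=; [by case/andP: (Zf_bounds y m0)|exact: ltW].
  by rewrite ler_pdivrMl.
by rewrite ler_expR lerN2 ler_pM2l // (hI _ _ Fs Jv).
Qed.

Lemma UB_R (F : set R) I' m : closed F -> ~ F (f alpha) -> (0 < m)%N ->
  (forall s v, F s -> J s = v%:E -> I' <= v) ->
  \sum_(y : {ffun 'I_m -> 'I_K})
     (if (m%:R^-1 * SS y \in F) && (f alpha < m%:R^-1 * SS y) then ww alpha y else 0)
  <= expR (- (m%:R * I')).
Proof.
move=> Fc Fm0 m0 hI.
have m0' : 0 < m%:R :> R by rewrite ltr0n.
set A2 := F `&` ([set x | f alpha <= x] `&` [set x | x <= bb]).
have A2c : closed A2 by apply: closedI => //; apply: closedI; [exact: closed_ge|exact: closed_le].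
set A3 := (fun u : R => - u) @^-1` A2.
have A3c : closed A3.
  apply: preimage_closed => // x _; exact: oppr_continuous.
have A3ub : has_ubound A3 by exists (- f alpha) => x [_ [/= h _]]; rewrite lerNr.
case: (pselect (A3 !=set0)) => [A30|A30]; last first.
  rewrite big1 ?expR_ge0 // => y _; case: ifP => // /andP[].
  rewrite inE => FZ Zm; exfalso; apply: A30; exists (- (m%:R^-1 * SS y)).
  rewrite /A3 /= opprK.
  split => //; split => /=; [exact: ltW|by case/andP: (Zf_bounds y m0)].
have := sup_in A3c A30 A3ub; move=> [Fs [/= s1a s1m]].
have s1m' : f alpha < - sup A3.
  by rewrite lt_neqAle s1a andbT; apply/eqP => e; apply: Fm0; rewrite e.
have hb1 : aa <= - sup A3 <= bb.
  apply/andP; split; last exact: s1m.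
  by apply: le_trans s1a; apply: ltW; apply: ff_gt.
have [v Jv] := J_fin hb1.
have hb2 : f alpha < - sup A3 <= bb by apply/andP; split.
apply: le_trans (_ : _ <= expR (- (m%:R * v))) _.
  apply: le_trans (right_side m0 hb2 Jv).
  apply: sum_if_le => [y|y]; first exact: ww_ge0.
  move=> /andP[]; rewrite inE => FZ Zm.
  have : - (m%:R^-1 * SS y) <= sup A3.
    apply: sup_upper_bound; first by split.
    rewrite /A3 /= opprK.
    split => //; split => /=; [exact: ltW|by case/andP: (Zf_bounds y m0)].
  by rewrite lerNl ler_pdivlMl.
by rewrite ler_expR lerN2 ler_pM2l // (hI _ _ Fs Jv).
Qed.
Lemma probZE m B : probZ (T alpha) q m B =
  \sum_(y : {ffun 'I_m -> 'I_K}) (if negreward q y \in B then ww alpha y else 0).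
Proof. by []. Qed.

Lemma probZ_ge0 m B : 0 <= probZ (T alpha) q m B.
Proof. by rewrite probZE; apply: sumr_ge0 => y _; case: ifP => // _; apply: ww_ge0. Qed.

Lemma probZ_le1 m B : probZ (T alpha) q m B <= 1.
Proof.
rewrite probZE -(sum_ww alpha m); apply: sum_if_le_total => y; exact: ww_ge0.
Qed.

Lemma UB_main B : (limn_esup (useq (fun n => probZ (T alpha) q n.+1 B))
   <= - ereal_inf (J @` closure B))%E.
Proof.
set F := closure B.
have Fc : closed F by apply: closed_closure.
have BF : B `<=` F by apply: subset_closure.
case: (pselect (exists s, F s /\ aa <= s <= bb)) => [[s0 [Fs0 hs0]]|hno]; last first.
  apply: le_trans (limn_esup_le_esups _ 0) _.
  apply: le_trans (_ : _ <= -oo)%E _; last exact: leNye.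
  apply: ge_ereal_sup => _ [n _ <-].
  rewrite /useq.
  have -> : probZ (T alpha) q n.+1 B = 0.
    rewrite probZE; apply: big1 => y _; case: ifP => //; rewrite inE => hB.
    exfalso; apply: hno; exists (negreward q y); split; first exact: BF.
    by rewrite negrewardE; apply: Zf_bounds.
  by rewrite /elog eqxx gt0_muleNy // lte_fin invr_gt0 ltr0n.
set I := ereal_inf (J @` F).
have I0 : (0 <= I)%E by apply: le_ereal_inf_tmp => _ [s _ <-]; apply: J_ge0.
have [v0 Jv0] := J_fin hs0.
have Ile : (I <= v0%:E)%E by apply: ereal_inf_lbound; exists s0.
have Ifin : I \is a fin_num by rewrite ge0_fin_numE // (le_lt_trans Ile) ?ltry.
have II : I = (fine I)%:E by rewrite fineK.
set I' := fine I.
have hI : forall s v, F s -> J s = v%:E -> I' <= v.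
  by move=> s v Fs Jsv; rewrite -lee_fin -II -Jsv; apply: ereal_inf_lbound; exists s.
have I'0 : 0 <= I' by rewrite -lee_fin -II.
rewrite II; apply: (@UB_seq R _ 2 I') => // n; split; first exact: probZ_ge0.
case: (pselect (F (f alpha))) => [Fm0|Fm0].
  have : I' <= 0 by apply: (hI _ _ Fm0); rewrite J_mid.
  move=> I'le; have -> : I' = 0 by apply/le_anti; rewrite I'le I'0.
  rewrite mulr0 oppr0 expR0 mulr1; apply: le_trans (probZ_le1 _ _) _; lra.
rewrite probZE.
apply: le_trans (sum_if_split _ (Q1 := fun y =>
   (n.+1%:R^-1 * SS y \in F) && (n.+1%:R^-1 * SS y < f alpha))
   (Q2 := fun y => (n.+1%:R^-1 * SS y \in F) && (f alpha < n.+1%:R^-1 * SS y)) _) _.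
- by move=> y; apply: ww_ge0.
- move=> y; rewrite inE negrewardE => hB.
  have FZ : F (n.+1%:R^-1 * SS y) by apply: BF.
  have -> : (n.+1%:R^-1 * SS y \in F) = true by apply/mem_set.
  rewrite /=.
  case: (ltgtP (n.+1%:R^-1 * SS y) (f alpha)) => //= e.
  by exfalso; apply: Fm0; rewrite -e.
- have := UB_L Fc Fm0 (ltn0Sn n) hI; have := UB_R Fc Fm0 (ltn0Sn n) hI.
  move=> h1 h2; apply: le_trans (lerD h2 h1) _; lra.
Qed.
Lemma expR_small (d : R) : 0 < d -> exists N, forall n, (N <= n)%N ->
  expR (- (n.+1%:R * d)) <= 4^-1.
Proof.
move=> d0; have [N hN] := small_inv (ln (4 : R)) d0; exists N => n Nn.
have := hN n Nn; have n0 : 0 < n.+1%:R :> R by rewrite ltr0n.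
rewrite ler_pdivrMr // => h.
have h4 : 0 < ln (4 : R) by rewrite ln_gt0 // ltr1n.
have : ln (4 : R) <= n.+1%:R * d by rewrite mulrC; apply: le_trans h; rewrite ger0_norm // ltW.
move=> h'.
rewrite -[X in _ <= X](lnK (_ : (4 : R)^-1 \in Num.pos)) ?posrE ?invr_gt0 //.
by rewrite ler_expR lnV ?posrE // lerN2.
Qed.

Lemma LB_interior B t beta : aa < t < bb -> f beta = t -> interior B t ->
  ((- MM p q alpha beta t)%:E <= limn_einf (useq (fun n => probZ (T alpha) q n.+1 B)))%E.
Proof.
move=> /andP[ta tb] fb /nbhs_ballP [r /= r0 rB].
apply/lee_subgt0Pr => e e0; rewrite -EFinB.
set ab := `|alpha - beta|.
have ab0 : 0 <= ab by apply: normr_ge0.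
set eps := Num.min (Num.min r ((t - aa) / 2)) (Num.min ((bb - t) / 2) (e / (ab + 1))).
have eps0 : 0 < eps.
  rewrite !lt_min r0 /= !divr_gt0 ?subr_gt0 //; lra.
have epsr : eps <= r by rewrite /eps !ge_min lexx.
have epsa : eps <= (t - aa) / 2 by rewrite /eps !ge_min lexx orbT.
have epsb : eps <= (bb - t) / 2 by rewrite /eps !ge_min lexx orbT.
have epse : ab * eps <= e.
  have : eps <= e / (ab + 1) by rewrite /eps !ge_min lexx !orbT.
  rewrite ler_pdivlMr ?ltr_pwDr // => h.
  nra.
have : range f (t - eps) by rewrite ff_range /= in_itv /=; apply/andP; split; lra.
move=> [g1 _ fg1].
have : range f (t + eps) by rewrite ff_range /= in_itv /=; apply/andP; split; lra.
move=> [g2 _ fg2].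
have bg1 : beta < g1.
  case: (ltgtP beta g1) => // h.
    by have := ff_decr h; lra.
  by subst; lra.
have bg2 : g2 < beta.
  case: (ltgtP g2 beta) => // h.
    by have := ff_decr h; lra.
  by subst; lra.
set d1 := KL (T g1) (T beta).
set d2 := KL (T g2) (T beta).
have d10 : 0 < d1 by apply: KL_gt0; rewrite gt_eqF.
have d20 : 0 < d2 by apply: KL_gt0; rewrite lt_eqF.
have [N1 hN1] := expR_small d10.
have [N2 hN2] := expR_small d20.
set cst := MM p q alpha beta t + ab * eps.
apply: le_trans (_ : (- cst)%:E <= _)%E; first by rewrite lee_fin /cst; lra.
apply: (@LB_seq R _ (2^-1) cst (maxn N1 N2)) => // n.
rewrite geq_max => /andP[n1 n2].
set m := n.+1.
have m0 : 0 < m%:R :> R by rewrite ltr0n.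
set inb := fun y : {ffun 'I_m -> 'I_K} => `|SS y - m%:R * t| < m%:R * eps.
have step1 : \sum_(y : {ffun 'I_m -> 'I_K}) (if inb y then ww alpha y else 0)
    <= probZ (T alpha) q m B.
  rewrite probZE; apply: sum_if_le => [y|y]; first exact: ww_ge0.
  rewrite /inb => h; apply/mem_set; rewrite negrewardE; apply: rB.
  rewrite /ball /=.
  have -> : t - m%:R^-1 * SS y = - ((SS y - m%:R * t) / m%:R).
    by field; rewrite gt_eqF.
  rewrite normrN normrM [`|m%:R^-1|]ger0_norm ?invr_ge0 ?ltW // ltr_pdivrMr //.
  apply: lt_le_trans h _; rewrite mulrC ler_wpM2r // ltW.
have step2 : expR (- (m%:R * cst)) *
    \sum_(y : {ffun 'I_m -> 'I_K}) (if inb y then ww beta y else 0)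
    <= \sum_(y : {ffun 'I_m -> 'I_K}) (if inb y then ww alpha y else 0).
  rewrite mulr_sumr; apply: ler_sum => y _; case: ifP => h; last by rewrite mulr0.
  exact: lower_change.
have step3 : 2^-1 <= \sum_(y : {ffun 'I_m -> 'I_K}) (if inb y then ww beta y else 0).
  have c1 := chernoff beta g1 (t - eps) m.
  have c2 := chernoff beta g2 (t + eps) m.
  have ed1 : MM p q beta g1 (t - eps) = d1.
    by rewrite -fg1 /d1 (KL_tilt_MM hp hq K0).
  have ed2 : MM p q beta g2 (t + eps) = d2.
    by rewrite -fg2 /d2 (KL_tilt_MM hp hq K0).
  rewrite ed1 in c1; rewrite ed2 in c2.
  have e1 := hN1 n n1; have e2 := hN2 n n2.
  have s1 := sum_ww beta m.
  have sp := @sum_if_split R _ predT inb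
    (fun y => (0 <= (beta - g1) * (SS y - m%:R * (t - eps))) ||
              (0 <= (beta - g2) * (SS y - m%:R * (t + eps)))) (@ww beta m)
    (@ww_ge0 beta m).
  have sp2 := @sum_if_split R _
    (fun y => (0 <= (beta - g1) * (SS y - m%:R * (t - eps))) ||
              (0 <= (beta - g2) * (SS y - m%:R * (t + eps))))
    (fun y => 0 <= (beta - g1) * (SS y - m%:R * (t - eps)))
    (fun y => 0 <= (beta - g2) * (SS y - m%:R * (t + eps))) (@ww beta m)
    (@ww_ge0 beta m) (fun y h => h).
  have : \sum_(y : {ffun 'I_m -> 'I_K}) (if predT y then ww beta y else 0) = 1.
    by rewrite -s1; apply: eq_bigr => y _.
  move=> s1'.
  have hsp : forall y, predT y -> inb y ||
      ((0 <= (beta - g1) * (SS y - m%:R * (t - eps))) ||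
       (0 <= (beta - g2) * (SS y - m%:R * (t + eps)))).
    move=> y _; rewrite /inb; case: ltP => //= h.
    have [h1|h1] := lerP 0 (SS y - m%:R * t).
      rewrite ger0_norm // in h; apply/orP; right.
      apply: mulr_ge0; first by rewrite subr_ge0 ltW.
      have -> : SS y - m%:R * (t + eps) = (SS y - m%:R * t) - m%:R * eps by ring.
      by rewrite subr_ge0.
    rewrite ltr0_norm // in h; apply/orP; left.
    apply: mulr_le0; first by rewrite subr_le0 ltW.
    have -> : SS y - m%:R * (t - eps) = (SS y - m%:R * t) + m%:R * eps by ring.
    by apply: le_trans (lerD (lexx _) h) _; rewrite addrN.
  have := sp hsp; rewrite s1' => h1.
  have := le_trans h1 (lerD (lexx _) sp2) => h2.
  have h3 : 1 <= \sum_(y : {ffun 'I_m -> 'I_K}) (if inb y then ww beta y else 0) + 2^-1.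
    apply: le_trans h2 _; rewrite lerD2l.
    apply: le_trans (lerD (le_trans c1 e1) (le_trans c2 e2)) _.
    by rewrite (_ : 4^-1 + 4^-1 = 2^-1 :> R) //; field.
  have : (1 : R) = 2^-1 + 2^-1 by field.
  move=> e12; move: h3; rewrite {1}e12 lerD2r; exact.
apply: le_trans (le_trans _ step2) step1.
rewrite mulrC; apply: ler_wpM2l; [exact: expR_ge0|exact: step3].
Qed.
Lemma LB_main B : (- ereal_inf (J @` interior B)
   <= limn_einf (useq (fun n => probZ (T alpha) q n.+1 B)))%E.
Proof.
rewrite ereal_infEN oppeK; apply: ge_ereal_sup => _ [_ [t tB <-] <-].
case: (ltP t aa) => [ta|ta].
  by rewrite hJo /= ?leNye //; left.
case: (ltP bb t) => [tb|tb].
  by rewrite hJo /= ?leNye //; right.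
case: (eqVneq t aa) => [e|ta'].
  subst t; rewrite hJa -EFinN.
  apply: (@LB_seq R _ 1 (ln (T alpha kmax)^-1) 0) => // n _.
  rewrite mul1r expR_pow -(ww_const alpha n.+1 kmax) probZE.
  apply: sum_if_ge1 => [y|]; first exact: ww_ge0.
  apply/mem_set; apply: interior_subset.
  by rewrite negrewardE SS_const mulrA mulVf ?mul1r // pnatr_eq0.
case: (eqVneq t bb) => [e|tb'].
  subst t; rewrite hJb -EFinN.
  apply: (@LB_seq R _ 1 (ln (T alpha kmin)^-1) 0) => // n _.
  rewrite mul1r expR_pow -(ww_const alpha n.+1 kmin) probZE.
  apply: sum_if_ge1 => [y|]; first exact: ww_ge0.
  apply/mem_set; apply: interior_subset.
  by rewrite negrewardE SS_const mulrA mulVf ?mul1r // pnatr_eq0.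
have h : aa < t < bb by rewrite !lt_neqAle ta tb eq_sym ta' tb'.
have [beta [fb Jt]] := J_int h.
by rewrite Jt -EFinN; apply: LB_interior.
Qed.

Lemma LDP_main : LDP (probZ (T alpha) q) J.
Proof.
split.
- exact: J_ge0.
- exact: J_lsc.
- exact: J_compact.
- move=> B _; split; [exact: LB_main|exact: UB_main].
Qed.
End WithJ.
End Main.

Unset Implicit Arguments.
Theorem mainTheorem4 (R : realType) (K : nat) (zeta : R) (p q : 'I_K -> R)
    (kmax kmin : 'I_K) (delta alpha : R) :
  (2 <= K)%N -> 0 < zeta < K%:R^-1 ->
  inS zeta p -> inS zeta q ->
  (forall k, q k <= q kmax) -> (forall k, q kmin <= q k) ->
  0 <= delta < ln (p kmax)^-1 ->
  0 <= alpha -> KL (tilt q p alpha) p = delta ->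
  let phi := tilt q p alpha in
  let f := fun beta : R => crossH (tilt q p beta) q in
  let a := ln (q kmax)^-1 in
  let b := ln (q kmin)^-1 in
  [/\ continuous f,
      (forall b1 b2 : R, b1 < b2 -> f b2 < f b1),
      range f = `]a, b[%classic &
      forall J : R -> \bar R,
        (forall t beta : R, a < t < b -> f beta = t ->
           J t = (KL (tilt q p beta) phi)%:E) ->
        J a = (ln (phi kmax)^-1)%:E ->
        J b = (ln (phi kmin)^-1)%:E ->
        (forall t : R, t < a \/ b < t -> J t = +oo%E) ->
        LDP (probZ phi q) J].
Proof.
move=> K2 /andP[z0 _] [_ hpz _] [_ hqz hqd] hmax hmin _ _ _ phi f a b.
have hp : forall k, 0 < p k by move=> k; apply: lt_trans (hpz k).
have hq : forall k, 0 < q k by move=> k; apply: lt_trans (hqz k).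
have K0 : (0 < K)%N by apply: leq_trans K2.
split.
- exact: (ff_continuous hp hq K0).
- by move=> b1 b2 h; eapply ff_decr; eassumption.
- by eapply ff_range; eassumption.
- move=> J hJ hJa hJb hJo.
  by eapply LDP_main; eassumption.
Qed.
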